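(* For the gradient-descent approximate policy iteration sequence described in the context, let $c:=\frac{\sqrt{|S|}\,\|\Phi\|_\infty}{\sigma_{\min,\Phi}}$, $$\beta:=\alpha^{m+H-1}\delta_{FV}+c\,\alpha_{GD,\gamma}^\eta(\alpha^{m+H-1}\delta_{FV}+1),$$ $$\tau:=(1+c\,\alpha_{GD,\gamma}^\eta)\Big(\frac{\alpha^m+\alpha^{m+H-1}}{1-\alpha}\delta_{FV}+\delta_{app}+\delta_{FV}\epsilon_{PE}\Big)+\frac{c\,\alpha_{GD,\gamma}^\eta}{1-\alpha}.$$ Then for every $k\ge1$, $$\|J^{\mu_k}-J_k\|_\infty\le\beta\,\|J_{k-1}-J^{\mu_{k-1}}\|_\infty+\tau.$$
   Context: Consider a Markov decision process with finite state space $S$ (with $|S|$ states), finite action space $A$, transition probabilities $P_{ij}(a)$, rewards $r(s,a)\in[0,1]$, and discount factor $\alpha\in(0,1)$. A (deterministic stationary) policy is a map $\mu:S\to A$; its value is $J^\mu(s)=E[\sum_{t\ge0}\alpha^t r(s_t,\mu(s_t))\mid s_0=s]$, and $J^*(s)=\max_\mu J^\mu(s)$. For a policy $\mu$, $(T_\mu J)(s)=r(s,\mu(s))+\alpha\sum_j P_{sj}(\mu(s))J(j)$; the Bellman operator is $(TJ)(s)=\max_{a\in A}\{r(s,a)+\alpha\sum_j P_{sj}(a)J(j)\}$; powers denote repeated application. $\|\cdot\|_\infty$ denotes the max norm and the induced matrix norm; $\|\cdot\|_2$ the Euclidean norm. Gradient-descent approximate policy iteration: fix integers $m\ge1$, $H\ge1$,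 $\eta\ge1$, a step size $\gamma>0$, constants $\epsilon_{LA},\epsilon_{PE}\ge0$, a feature matrix $\Phi\in\mathbb{R}^{|S|\times d}$ whose row $i$ is $\phi(i)^\top$, and subsets $D_k\subseteq S$ ($k\ge0$) such that $\{\phi(i)\}_{i\in D_k}$ has rank $d$. Let $\Phi_{D_k}$ be the submatrix of $\Phi$ with rows indexed by $D_k$, $P_k\in\{0,1\}^{|D_k|\times|S|}$ the matrix selecting the coordinates in $D_k$, and $\mathcal{M}_{k+1}:=\Phi(\Phi_{D_k}^\top\Phi_{D_k})^{-1}\Phi_{D_k}^\top P_k$. Start with $\theta_0\in\mathbb{R}^d$, $J_0=\Phi\theta_0$, and an arbitrary policy $\mu_0$. For each $k\ge0$: $\mu_{k+1}$ is any policy with $\|T^HJ_k-T_{\mu_{k+1}}T^{H-1}J_k\|_\infty\le\epsilon_{LA}$; $w_{k+1}\in\mathbb{R}^{|S|}$ satisfies $w_{k+1}(i)=0$ for $i\notin D_k$ and $\|w_{k+1}\|_\infty\le\epsilon_{PE}$; $\hat J_{k+1}:=T^m_{\mu_{k+1}}T^{H-1}J_k+w_{k+1}$; set $\theta_{k+1,0}=\theta_k$ and for $\ell=1,\dots,\eta$, $\theta_{k+1,\ell}=\theta_{k+1,\ell-1}-\gamma\big(\Phi_{D_k}^\top\Phi_{D_k}\theta_{k+1,\ell-1}-\Phi_{D_k}^\top P_k\hat J_{k+1}\big)$; then $\theta_{k+1}=\theta_{k+1,\eta}$ and $J_{k+1}=\Phi\theta_{k+1}$. Define $\delta_{FV}:=\sup_{k\ge1}\|\mathcal{M}_k\|_\infty$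 (assumed finite), $\delta_{app}:=\sup_{k\ge1}\sup_\mu\|\mathcal{M}_kJ^\mu-J^\mu\|_\infty$ (inner supremum over all policies), $\alpha_{GD,\gamma}:=\sup_{k\ge0}\max_i|1-\gamma\lambda_i(\Phi_{D_k}^\top\Phi_{D_k})|$ where $\lambda_i$ is the $i$-th eigenvalue, and $\sigma_{\min,\Phi}$ the smallest singular value of $\Phi$. *)

(* Defs.v *)
From HB Require Import structures.
From mathcomp Require Import all_boot all_order all_algebra.
From mathcomp Require Import all_classical all_reals all_analysis.
Set Implicit Arguments. Unset Strict Implicit. Unset Printing Implicit Defensive.
Import Order.TTheory GRing.Theory Num.Theory numFieldNormedType.Exports.
Local Open Scope ring_scope.
Local Open Scope classical_set_scope.

Definition vnorm {R : realType} {n : nat} (v : 'cV[R]_n) : R :=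
  \big[Num.max/0]_(i < n) `|v i ord0|.

Definition mxnorm {R : realType} {p q : nat} (M : 'M[R]_(p, q)) : R :=
  \big[Num.max/0]_(i < p) \sum_(j < q) `|M i j|.

Definition sumseries {R : realType} (u : R ^nat) : R := limn (series u).

Section MDP.
Variables (R : realType) (n : nat) (A : finType).
(* P a i j = P_{ij}(a) ; r i a = r(i,a) ; policies are 'I_n -> A *)
Variables (P : A -> 'M[R]_n) (r : 'I_n -> A -> R) (alpha : R).

Definition Pmu (mu : 'I_n -> A) : 'M[R]_n := \matrix_(i, j) P (mu i) i j.
Definition rmu (mu : 'I_n -> A) : 'cV[R]_n := \col_i r i (mu i).

Definition Tmu (mu : 'I_n -> A) (J : 'cV[R]_n) : 'cV[R]_n :=
  rmu mu + alpha *: (Pmu mu *m J).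

Definition Tbell (J : 'cV[R]_n) : 'cV[R]_n :=
  \col_i sup (range (fun a : A => r i a + alpha * \sum_(j < n) P a i j * J j ord0)).

(* J^mu(s) = E[sum_t alpha^t r(s_t, mu(s_t)) | s_0 = s]
          = sum_{t>=0} alpha^t (P_mu^t r_mu)(s) *)
Definition Jpol (mu : 'I_n -> A) : 'cV[R]_n :=
  \col_s sumseries (fun t : nat => alpha ^+ t * ((Pmu mu ^+ t *m rmu mu) s ord0)).
End MDP.

Section Approx.
Variables (R : realType) (n d : nat).

(* P_D : selection matrix of the coordinates in D (rows ordered by enum D) *)
Definition selmx (D : {set 'I_n}) : 'M[R]_(#|D|, n) :=
  \matrix_(i < #|D|, j < n) ((enum_val i == j)%:R).

Definition PhiD (Phi : 'M[R]_(n, d)) (D : {set 'I_n}) : 'M[R]_(#|D|, d) :=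
  selmx D *m Phi.

Definition Mproj (Phi : 'M[R]_(n, d)) (D : {set 'I_n}) : 'M[R]_n :=
  Phi *m invmx ((PhiD Phi D)^T *m PhiD Phi D) *m (PhiD Phi D)^T *m selmx D.

Definition gd_step (gamma : R) (Phi : 'M[R]_(n, d)) (D : {set 'I_n})
  (Jhat : 'cV[R]_n) (th : 'cV[R]_d) : 'cV[R]_d :=
  th - gamma *: (((PhiD Phi D)^T *m PhiD Phi D) *m th
                 - (PhiD Phi D)^T *m (selmx D *m Jhat)).

Definition sigma_min (Phi : 'M[R]_(n, d)) : R :=
  Num.sqrt (inf [set a : R | eigenvalue (Phi^T *m Phi) a]).

Definition alpha_GD (gamma : R) (Phi : 'M[R]_(n, d)) (D : nat -> {set 'I_n}) : R :=
  sup [set x : R | exists k a, eigenvalue ((PhiD Phi (D k))^T *m PhiD Phi (D k)) a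
                                /\ x = `|1 - gamma * a|].

(* delta_FV = sup_{k>=1} ||M_k||_inf, with M_{k+1} built from D_k *)
Definition delta_FV (Phi : 'M[R]_(n, d)) (D : nat -> {set 'I_n}) : R :=
  sup [set x : R | exists k, x = mxnorm (Mproj Phi (D k))].
End Approx.

Definition delta_app (R : realType) (n d : nat) (A : finType)
  (P : A -> 'M[R]_n) (r : 'I_n -> A -> R) (alpha : R)
  (Phi : 'M[R]_(n, d)) (D : nat -> {set 'I_n}) : R :=
  sup [set x : R | exists (k : nat) (mu : 'I_n -> A),
         x = vnorm (Mproj Phi (D k) *m Jpol P r alpha mu - Jpol P r alpha mu)].

(* Main.v *)
Require Import Defs.
From HB Require Import structures.
From mathcomp Require Import all_boot all_order all_algebra.
From mathcomp Require Import all_classical all_reals all_analysis.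
From mathcomp Require Import complex sesquilinear spectral.
From mathcomp Require Import ring lra.
Import Order.TTheory GRing.Theory Num.Theory numFieldNormedType.Exports.
Local Open Scope ring_scope.

Section RealSpectral.
Variables (R : rcfType) (d : nat).
Local Notation C := (R[i]).
Local Notation iota := (real_complex R).
Local Open Scope sesquilinear_scope.

Lemma iota_real (x : R) : (iota x) \is Num.real.
Proof. by apply/complex_realP; exists x. Qed.

Lemma conj_iota (x : R) : (iota x)^* = iota x.
Proof. exact/conj_Creal/iota_real. Qed.

Lemma mapc_tr m p (M : 'M[R]_(m, p)) : (map_mx iota M)^t* = map_mx iota M^T.
Proof. by apply/matrixP => i j; rewrite !mxE conj_iota. Qed.

Variable G : 'M[R]_d.
Hypothesis Gsym : G^T = G.

Let Gc := map_mx iota G.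
Lemma Gc_herm : Gc \is hermsymmx.
Proof.
apply: realsym_hermsym.
  rewrite qualifE /=; apply/eqP; rewrite expr0 scale1r; apply/matrixP => i j.
  by rewrite /Gc !mxE -{1}Gsym mxE.
by apply/mxOverP => i j; rewrite /Gc mxE iota_real.
Qed.

Let U := spectralmx Gc.
Let sp := spectral_diag Gc.
Lemma Gc_eq : Gc = U^t* *m diag_mx sp *m U.
Proof.
have := (orthomx_spectralP (A:=Gc)); rewrite (hermitian_normalmx Gc_herm) => h.
by have /(_ isT) := elimT h; rewrite invmx_unitary ?spectral_unitarymx.
Qed.
Lemma UU : U *m U^t* = 1%:M.
Proof. exact/unitarymxP/spectral_unitarymx. Qed.
Lemma UtU : U^t* *m U = 1%:M.
Proof.
by rewrite -invmx_unitary ?spectral_unitarymx // mulVmx ?spectral_unit.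
Qed.

Lemma quadQ (N : 'M[R]_d) (t : 'rV[C]_d) (x : 'cV[R]_d) :
  map_mx iota N = U^t* *m diag_mx t *m U ->
  iota ((x^T *m N *m x) 0 0) =
  \sum_i t 0 i * (((U *m map_mx iota x) i 0)^* * (U *m map_mx iota x) i 0).
Proof.
move=> hN.
have E (M : 'M[R]_1) : iota (M 0 0) = (map_mx iota M) 0 0 by rewrite mxE.
rewrite E.
rewrite !map_mxM hN -mapc_tr.
set xc := map_mx iota x.
have -> : xc^t* *m (U^t* *m diag_mx t *m U) *m xc =
          (U *m xc)^t* *m diag_mx t *m (U *m xc).
  by rewrite trmx_mul map_mxM !mulmxA.
rewrite mxE; apply: eq_bigr => i _.
by rewrite mul_mx_diag !mxE mulrA [_ * t 0 i]mulrC.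
Qed.

Lemma sp_real i : sp 0 i \is Num.real.
Proof. by have /mxOverP := hermitian_spectral_diag_real Gc_herm; apply. Qed.

Lemma sp_eigen i : eigenvalue G (complex.Re (sp 0 i)).
Proof.
rewrite eigenvalue_root_char -(fmorph_root iota) map_char_poly.
have reE : (complex.Re (sp 0 i))%:C%C = sp 0 i by exact: RRe_real (sp_real i).
suff h : root (char_poly Gc) (sp 0 i).
  move: h; congr (root _ _); exact: esym reE.
rewrite -eigenvalue_root_char.
apply/eigenvalueP; exists (row i U).
  rewrite -/Gc Gc_eq !mulmxA -row_mul UU row1.
  rewrite [delta_mx 0 i *m _](_ : _ = sp 0 i *: delta_mx 0 i).
    by rewrite -scalemxAl -rowE.
  apply/matrixP => a b; rewrite mul_mx_diag !mxE.
  by case: (eqVneq i b) => [->|nib]; rewrite ?andbT ?andbF ?mulr0 ?mul0r // mulrC.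
apply/eqP => h.
have h2 : row i (U *m U^t*) = 0 by rewrite row_mul h mul0mx.
by move: h2; rewrite UU => /matrixP /(_ 0 i); rewrite !mxE eqxx /= => /eqP; rewrite oner_eq0.
Qed.

Lemma iota_sum (f : 'I_d -> R) : iota (\sum_i f i) = \sum_i iota (f i).
Proof. exact: rmorph_sum. Qed.
Lemma iota_mul (a b : R) : iota (a * b) = iota a * iota b.
Proof. exact: rmorphM. Qed.
Lemma iota_add (a b : R) : iota (a + b) = iota a + iota b.
Proof. exact: rmorphD. Qed.
Lemma iota_sq (a : R) : iota (a ^+ 2) = iota a * iota a.
Proof. by rewrite expr2 iota_mul. Qed.

Lemma iota_wt (y : C) : iota (complex.Re (y^* * y)) = y^* * y.
Proof. by apply: RRe_real; apply: ger0_real; rewrite mulrC mul_conjC_ge0. Qed.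

Lemma Re_ge0 (z : C) : 0 <= z -> 0 <= complex.Re z.
Proof. by rewrite lecE => /andP[_]. Qed.

Lemma real_spectral_main : exists s : 'I_d -> R, (forall i, eigenvalue G (s i)) /\
  forall x : 'cV[R]_d, exists wt : 'I_d -> R, (forall i, 0 <= wt i) /\
   (x^T *m x) 0 0 = \sum_i wt i /\
   (x^T *m G *m x) 0 0 = \sum_i s i * wt i /\
   (forall a b : R, (x^T *m ((a%:M + b *: G) *m (a%:M + b *: G)) *m x) 0 0
                    = \sum_i (a + b * s i)^+2 * wt i).
Proof.
exists (fun i => complex.Re (sp 0 i)); split; first exact: sp_eigen.
move=> x; set y := U *m map_mx iota x.
exists (fun i => complex.Re ((y i 0)^* * y i 0)); split.
  by move=> i; apply: Re_ge0; rewrite mulrC mul_conjC_ge0.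
have reE i : iota (complex.Re (sp 0 i)) = sp 0 i by exact: RRe_real (sp_real i).
split.
  have -> : x^T *m x = x^T *m 1%:M *m x by rewrite mulmx1.
  apply: (@complexI R).
  rewrite (quadQ _ (const_mx 1)); last first.
    by rewrite diag_const_mx mulmx1 UtU map_mx1.
  rewrite iota_sum; apply: eq_bigr => i _; by rewrite iota_wt mxE mul1r.
split.
  apply: (@complexI R); rewrite (quadQ _ sp); last exact: Gc_eq.
  rewrite iota_sum; apply: eq_bigr => i _; by rewrite iota_mul iota_wt reE.
move=> a b; apply: (@complexI R).
set t1 := \row_i (iota a + iota b * sp 0 i).
have hM : map_mx iota (a%:M + b *: G) = U^t* *m diag_mx t1 *m U.
  rewrite map_mxD map_scalar_mx map_mxZ -/Gc Gc_eq.
  have eD : diag_mx t1 = (iota a)%:M + iota b *: diag_mx sp.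
    apply/matrixP => i j; rewrite !mxE.
    by case: (eqVneq i j) => [->|nij]; rewrite ?eqxx ?mulr1n ?mulr0n ?mulr1 ?mulr0 ?addr0.
  rewrite eD mulmxDr mulmxDl mul_mx_scalar -scalemxAl UtU scalemx1.
  by rewrite -scalemxAr -scalemxAl.
rewrite (quadQ _ (\row_i (t1 0 i * t1 0 i))); last first.
  rewrite map_mxM hM -!mulmxA; congr (_ *m _).
  by rewrite !mulmxA mulmxtVK ?spectral_unitarymx // mulmx_diag.
rewrite iota_sum; apply: eq_bigr => i _.
by rewrite iota_mul iota_wt !mxE iota_sq iota_add iota_mul reE.
Qed.
End RealSpectral.

Set Implicit Arguments. Unset Strict Implicit. Unset Printing Implicit Defensive.

Section Norms.
Variable R : realType.

Lemma vnorm_ge0 n (v : 'cV[R]_n) : 0 <= vnorm v.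
Proof. by rewrite /vnorm; elim/big_ind: _ => // x y hx hy; rewrite le_max hx. Qed.

Lemma vnorm_coord n (v : 'cV[R]_n) i : `|v i ord0| <= vnorm v.
Proof. exact: (le_bigmax _ (fun i => `|v i ord0|)). Qed.

Lemma vnorm_le n (v : 'cV[R]_n) b : 0 <= b -> (forall i, `|v i ord0| <= b) -> vnorm v <= b.
Proof. by move=> b0 h; apply: bigmax_le. Qed.

Lemma vnormD n (u v : 'cV[R]_n) : vnorm (u + v) <= vnorm u + vnorm v.
Proof.
apply: vnorm_le; first by rewrite addr_ge0 ?vnorm_ge0.
by move=> i; rewrite mxE (le_trans (ler_normD _ _)) // lerD ?vnorm_coord.
Qed.

Lemma vnormN n (v : 'cV[R]_n) : vnorm (- v) = vnorm v.
Proof. by rewrite /vnorm; apply: eq_bigr => i _; rewrite mxE normrN. Qed.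

Lemma vnormB n (u v : 'cV[R]_n) : vnorm (u - v) = vnorm (v - u).
Proof. by rewrite -opprB vnormN. Qed.

Lemma vnorm0 n : vnorm (0 : 'cV[R]_n) = 0.
Proof. by apply/le_anti; rewrite vnorm_ge0 andbT vnorm_le // => i; rewrite mxE normr0. Qed.

Lemma mxnorm_ge0 p q (M : 'M[R]_(p, q)) : 0 <= mxnorm M.
Proof.
rewrite /mxnorm; elim/big_ind: _ => // [x y hx hy|i _]; first by rewrite le_max hx.
by apply: sumr_ge0 => j _.
Qed.

Lemma mxnorm_row p q (M : 'M[R]_(p, q)) i : \sum_j `|M i j| <= mxnorm M.
Proof. exact: (le_bigmax _ (fun i => \sum_j `|M i j|)). Qed.

Lemma vnorm_mul p q (M : 'M[R]_(p, q)) v : vnorm (M *m v) <= mxnorm M * vnorm v.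
Proof.
apply: vnorm_le; first by rewrite mulr_ge0 ?mxnorm_ge0 ?vnorm_ge0.
move=> i; rewrite mxE (le_trans (ler_norm_sum _ _ _)) //.
apply: (@le_trans _ _ (\sum_j `|M i j| * vnorm v)).
  by apply: ler_sum => j _; rewrite normrM ler_wpM2l ?vnorm_coord.
by rewrite -mulr_suml ler_wpM2r ?vnorm_ge0 ?mxnorm_row.
Qed.

Lemma vnormZ n a (v : 'cV[R]_n) : vnorm (a *: v) <= `|a| * vnorm v.
Proof.
apply: vnorm_le; first by rewrite mulr_ge0 ?vnorm_ge0.
by move=> i; rewrite mxE normrM ler_wpM2l ?vnorm_coord.
Qed.

Definition n2 n (v : 'cV[R]_n) : R := (v^T *m v) ord0 ord0.

Lemma n2E n (v : 'cV[R]_n) : n2 v = \sum_i v i ord0 ^+ 2.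
Proof. by rewrite /n2 mxE; apply: eq_bigr => i _; rewrite mxE expr2. Qed.

Lemma n2_ge0 n (v : 'cV[R]_n) : 0 <= n2 v.
Proof. by rewrite n2E sumr_ge0 // => i _; rewrite sqr_ge0. Qed.

Lemma vnorm_n2 n (v : 'cV[R]_n) : vnorm v ^+ 2 <= n2 v.
Proof.
have h : vnorm v <= Num.sqrt (n2 v).
  apply: vnorm_le; first exact: sqrtr_ge0.
  move=> i; rewrite -sqrtr_sqr ler_sqrt; last exact: n2_ge0.
  by rewrite n2E (bigD1 i) //= lerDl sumr_ge0 // => j _; rewrite sqr_ge0.
rewrite -(sqr_sqrtr (n2_ge0 v)) lerXn2r ?nnegrE ?vnorm_ge0 ?sqrtr_ge0 //.
Qed.

Lemma n2_vnorm n (v : 'cV[R]_n) : n2 v <= n%:R * vnorm v ^+ 2.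
Proof.
rewrite n2E (@le_trans _ _ (\sum_(i < n) vnorm v ^+ 2)) //.
  apply: ler_sum => i _; rewrite -real_normK ?num_real // lerXn2r ?nnegrE ?vnorm_ge0 //.
  exact: vnorm_coord.
by rewrite sumr_const card_ord mulr_natl.
Qed.
End Norms.

Section MDPfacts.
Variables (R : realType) (n : nat) (A : finType).
Variables (P : A -> 'M[R]_n) (r : 'I_n -> A -> R) (alpha : R).
Hypothesis P_ge0 : forall a i j, 0 <= P a i j.
Hypothesis P_sum : forall a i, \sum_(j < n) P a i j = 1.
Hypothesis r01 : forall i a, 0 <= r i a <= 1.
Hypothesis alpha01 : 0 < alpha < 1.

Let a0 : 0 <= alpha. Proof. by case/andP: alpha01 => /ltW. Qed.
Let a1 : alpha < 1. Proof. by case/andP: alpha01. Qed.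
Definition Bd := (1 - alpha)^-1.
Lemma Bd_ge0 : 0 <= Bd.
Proof. by rewrite /Bd invr_ge0 subr_ge0 ltW. Qed.
Lemma Bd_eq : 1 + alpha * Bd = Bd.
Proof.
have h : 1 - alpha != 0 by rewrite subr_eq0 eq_sym lt_eqF.
by rewrite /Bd; field.
Qed.

Lemma Pmu_norm mu : mxnorm (Pmu P mu) <= 1.
Proof.
apply: bigmax_le => // i _.
rewrite (eq_bigr (fun j => P (mu i) i j)) ?P_sum // => j _.
by rewrite mxE ger0_norm.
Qed.

Lemma Tmu_sub mu x y : Tmu P r alpha mu x - Tmu P r alpha mu y = alpha *: (Pmu P mu *m (x - y)).
Proof. by rewrite /Tmu opprD addrACA subrr add0r mulmxBr scalerBr. Qed.

Lemma Tmu_contr mu x y : vnorm (Tmu P r alpha mu x - Tmu P r alpha mu y) <= alpha * vnorm (x - y).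
Proof.
rewrite Tmu_sub (le_trans (vnormZ _ _)) // ger0_norm // ler_wpM2l //.
rewrite (le_trans (vnorm_mul _ _)) // -[X in _ <= X]mul1r ler_wpM2r ?vnorm_ge0 //.
exact: Pmu_norm.
Qed.

Lemma iter_Tmu_contr mu k x y :
  vnorm (iter k (Tmu P r alpha mu) x - iter k (Tmu P r alpha mu) y) <= alpha ^+ k * vnorm (x - y).
Proof.
elim: k => [|k IH]; first by rewrite expr0 mul1r.
rewrite !iterS (le_trans (Tmu_contr _ _ _)) // exprS -mulrA ler_wpM2l //.
Qed.

Lemma Pmu_box mu (z : 'cV[R]_n) b i : (forall j, 0 <= z j ord0 <= b) ->
  0 <= (Pmu P mu *m z) i ord0 <= b.
Proof.
move=> hz; rewrite mxE; apply/andP; split.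
  by apply: sumr_ge0 => j _; rewrite mxE mulr_ge0 //; case/andP: (hz j).
apply: (@le_trans _ _ (\sum_j P (mu i) i j * b)).
  by apply: ler_sum => j _; rewrite mxE ler_wpM2l //; case/andP: (hz j).
by rewrite -mulr_suml P_sum mul1r.
Qed.

Lemma box_dist (u v : 'cV[R]_n) b : 0 <= b -> (forall j, 0 <= u j ord0 <= b) ->
  (forall j, 0 <= v j ord0 <= b) -> vnorm (u - v) <= b.
Proof.
move=> b0 hu hv; apply: vnorm_le => // i.
rewrite !mxE ler_norml; case/andP: (hu i) => h1 h2; case/andP: (hv i) => h3 h4.
apply/andP; split; lra.
Qed.

Lemma sup_range_ub (g : A -> R) a : g a <= sup (range g).
Proof.
apply: ub_le_sup; last by exists a.
exists (\big[Num.max/0]_b g b) => _ [b _ <-].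
exact: (le_bigmax _ g).
Qed.

Lemma sup_range_le (g : A -> R) b (x0 : A) : (forall a, g a <= b) -> sup (range g) <= b.
Proof.
move=> h; apply: ge_sup; first by exists (g x0), x0.
by move=> _ [a _ <-].
Qed.

Lemma TbellE J i : Tbell P r alpha J i ord0 =
  sup (range (fun a => r i a + alpha * \sum_(j < n) P a i j * J j ord0)).
Proof. by rewrite mxE. Qed.

Lemma Tbell_contr (x0 : A) J K : vnorm (Tbell P r alpha J - Tbell P r alpha K) <= alpha * vnorm (J - K).
Proof.
apply: vnorm_le; first by rewrite mulr_ge0 ?vnorm_ge0.
set e := alpha * vnorm (J - K).
have key (J1 K1 : 'cV[R]_n) i : vnorm (J1 - K1) = vnorm (J - K) \/ vnorm (J1 - K1) = vnorm (K - J) ->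
  sup (range (fun a => r i a + alpha * \sum_(j < n) P a i j * J1 j ord0)) <=
  sup (range (fun a => r i a + alpha * \sum_(j < n) P a i j * K1 j ord0)) + e.
  move=> hJK; apply: (sup_range_le x0) => a.
  rewrite -lerBlDr; apply: le_trans (sup_range_ub _ a).
  have : alpha * \sum_j P a i j * J1 j ord0 <= alpha * \sum_j P a i j * K1 j ord0 + e.
    rewrite /e -lerBlDl -mulrBr ler_wpM2l // -sumrB.
    apply: (@le_trans _ _ (\sum_j P a i j * vnorm (J1 - K1))).
      apply: ler_sum => j _; rewrite -mulrBr ler_wpM2l //.
      apply: le_trans (vnorm_coord _ j); rewrite !mxE; exact: ler_norm.
    rewrite -mulr_suml P_sum mul1r.
    by case: hJK => ->; rewrite // vnormB.
  lra.
move=> i; rewrite !mxE ler_norml; apply/andP; split.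
  rewrite lerNl opprB lerBlDl; apply: le_trans (key _ _ i _) _; [by right | by rewrite addrC].
rewrite lerBlDl; apply: le_trans (key _ _ i _) _; [by left | by rewrite addrC].
Qed.

Lemma iter_Tbell_contr (x0 : A) k J K :
  vnorm (iter k (Tbell P r alpha) J - iter k (Tbell P r alpha) K) <= alpha ^+ k * vnorm (J - K).
Proof.
elim: k => [|k IH]; first by rewrite expr0 mul1r.
rewrite !iterS (le_trans (Tbell_contr x0 _ _)) // exprS -mulrA ler_wpM2l //.
Qed.

Lemma Tbell_box (x0 : A) (J : 'cV[R]_n) : (forall j, 0 <= J j ord0 <= Bd) ->
  forall i, 0 <= Tbell P r alpha J i ord0 <= Bd.
Proof.
move=> hJ i; rewrite TbellE.
have hs a : 0 <= \sum_(j < n) P a i j * J j ord0 <= 1 * Bd.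
  apply/andP; split; first by apply: sumr_ge0 => j _; rewrite mulr_ge0 //; case/andP: (hJ j).
  rewrite -(P_sum a i) mulr_suml; apply: ler_sum => j _; rewrite ler_wpM2l //.
  by case/andP: (hJ j).
apply/andP; split.
  apply: le_trans (sup_range_ub _ x0).
  case/andP: (r01 i x0) => h1 _; case/andP: (hs x0) => h2 _.
  by rewrite addr_ge0 // mulr_ge0.
apply: (sup_range_le x0) => a; rewrite -[X in _ <= X]Bd_eq.
case/andP: (r01 i a) => _ h1; case/andP: (hs a) => _; rewrite mul1r => h2.
by rewrite lerD // ler_wpM2l.
Qed.

Lemma iter_Tbell_box (x0 : A) k (J : 'cV[R]_n) : (forall j, 0 <= J j ord0 <= Bd) ->
  forall i, 0 <= iter k (Tbell P r alpha) J i ord0 <= Bd.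
Proof. by elim: k => [//|k IH] hJ; rewrite iterS; apply: Tbell_box => //; apply: IH. Qed.

Definition Vs mu N : 'cV[R]_n := \sum_(t < N) (alpha ^+ t) *: (Pmu P mu ^+ t *m rmu r mu).

Lemma Ppow_box mu t i : 0 <= (Pmu P mu ^+ t *m rmu r mu) i ord0 <= 1.
Proof.
elim: t i => [|t IH] i.
  by rewrite expr0 mul1mx mxE.
by rewrite exprS -mulmxE -mulmxA; apply: Pmu_box.
Qed.

Lemma VsS mu N : Vs mu N.+1 = rmu r mu + alpha *: (Pmu P mu *m Vs mu N).
Proof.
rewrite /Vs big_ord_recl /= expr0 scale1r mul1mx; congr (_ + _).
rewrite mulmx_sumr scaler_sumr; apply: eq_bigr => t _.
by rewrite /= !exprS -scalerA -mulmxE -mulmxA scalemxAr.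
Qed.

Lemma Vs_box mu N i : 0 <= Vs mu N i ord0 <= Bd.
Proof.
elim: N i => [|N IH] i.
  by rewrite /Vs big_ord0 mxE lexx Bd_ge0.
have -> : Vs mu N.+1 i ord0 = r i (mu i) + alpha * (Pmu P mu *m Vs mu N) i ord0.
  by rewrite VsS [LHS]mxE [X in X + _]mxE [X in _ + X]mxE.
case/andP: (r01 i (mu i)) => h1 h2.
case/andP: (@Pmu_box mu (Vs mu N) Bd i IH) => h3 h4.
have e := Bd_eq; have := a0 => ha.
apply/andP; split; nra.
Qed.

Lemma Vs_incr mu N i : Vs mu N i ord0 <= Vs mu N.+1 i ord0.
Proof.
rewrite /Vs big_ord_recr /= [X in _ <= X]mxE lerDl mxE mulr_ge0 ?exprn_ge0 //.
by case/andP: (Ppow_box mu N i).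
Qed.

Lemma Vs_series mu s : series (fun t => alpha ^+ t * ((Pmu P mu ^+ t *m rmu r mu) s ord0)) =
  (fun N => Vs mu N s ord0).
Proof.
apply: funext => N; rewrite /series /= big_mkord /Vs summxE.
by apply: eq_bigr => t _; rewrite [RHS]mxE.
Qed.

Lemma Vs_cvg mu s : cvgn (fun N => Vs mu N s ord0).
Proof.
apply: nondecreasing_is_cvgn.
  apply: homo_leq => //; [exact: le_trans | move=> N; exact: Vs_incr].
exists Bd => _ [N _ <-]; by case/andP: (Vs_box mu N s).
Qed.

Lemma Jpol_E mu s : Jpol P r alpha mu s ord0 = limn (fun N => Vs mu N s ord0).
Proof. by rewrite mxE /sumseries Vs_series. Qed.

Lemma Jpol_box mu s : 0 <= Jpol P r alpha mu s ord0 <= Bd.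
Proof.
rewrite Jpol_E; apply/andP; split.
  apply: limr_ge; first exact: Vs_cvg.
  by apply: nearW => N; case/andP: (Vs_box mu N s).
apply: limr_le; first exact: Vs_cvg.
by apply: nearW => N; case/andP: (Vs_box mu N s).
Qed.

Lemma Jpol_fix mu : Tmu P r alpha mu (Jpol P r alpha mu) = Jpol P r alpha mu.
Proof.
apply/matrixP => s j; rewrite ord1 {j} [RHS]Jpol_E; apply/esym/(cvg_lim (@Rhausdorff R)).
rewrite -cvg_shiftS /=.
have -> : (fun N => Vs mu N.+1 s ord0) = (fun N =>
    r s (mu s) + alpha * \sum_(j < n) Pmu P mu s j * Vs mu N j ord0).
  by apply: funext => N; rewrite VsS !mxE.
rewrite /Tmu !mxE.
apply: cvgD; first exact: cvg_cst.
apply: cvgMr.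
apply: (@cvg_big R 'I_n +%R 0 xpredT add_continuous).
move=> j _; apply: cvgMr.
rewrite Jpol_E; exact: Vs_cvg.
Qed.
End MDPfacts.

Section LinAlg.
Variable R : realType.

Lemma vnormZ_eq n a (v : 'cV[R]_n) : vnorm (a *: v) = `|a| * vnorm v.
Proof.
apply/le_anti; rewrite vnormZ /=.
have [->|a0] := eqVneq a 0; first by rewrite normr0 mul0r vnorm_ge0.
rewrite -ler_pdivlMl ?normr_gt0 //.
have -> : vnorm v = vnorm (a^-1 *: (a *: v)) by rewrite scalerA mulVf // scale1r.
by rewrite (le_trans (vnormZ _ _)) // normrV ?unitfE.
Qed.

Lemma vnorm_gt0 n (v : 'cV[R]_n) : v != 0 -> 0 < vnorm v.
Proof.
move=> v0; have [i vi] : exists i, v i ord0 != 0.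
  apply/existsP; apply: contraR v0 => /existsPn h; apply/eqP/matrixP => i j.
  by rewrite ord1 mxE; move/negPn: (h i) => /eqP.
by apply: lt_le_trans (vnorm_coord _ i); rewrite normr_gt0.
Qed.

Lemma n2_eq0 n (v : 'cV[R]_n) : n2 v = 0 -> v = 0.
Proof.
rewrite n2E => h; apply/matrixP => i j; rewrite ord1 mxE.
have := @psumr_eq0P _ _ xpredT (fun i => v i ord0 ^+ 2) (fun i _ => sqr_ge0 _) h i isT.
by move/eqP; rewrite sqrf_eq0 => /eqP.
Qed.

Lemma n2_gt0 n (v : 'cV[R]_n) : v != 0 -> 0 < n2 v.
Proof.
move=> v0; rewrite lt_neqAle n2_ge0 andbT eq_sym; apply: contra v0 => /eqP.
by move/n2_eq0 => ->.
Qed.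

Lemma colfree p d (B : 'M[R]_(p, d)) : \rank B = d -> forall x : 'cV_d, B *m x = 0 -> x = 0.
Proof.
move=> rB x Bx; apply: trmx_inj; rewrite trmx0; apply/eqP.
have rf : row_free B^T by rewrite /row_free mxrank_tr rB.
by rewrite -(mulmx_free_eq0 _ rf) -trmx_mul Bx trmx0.
Qed.

Lemma quad_Gram p d (B : 'M[R]_(p, d)) x : (x^T *m (B^T *m B) *m x) ord0 ord0 = n2 (B *m x).
Proof. by rewrite /n2 trmx_mul !mulmxA. Qed.

Lemma Gram_sym p d (B : 'M[R]_(p, d)) : (B^T *m B)^T = B^T *m B.
Proof. by rewrite trmx_mul trmxK. Qed.

Lemma Gram_unit p d (B : 'M[R]_(p, d)) : \rank B = d -> (B^T *m B) \in unitmx.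
Proof.
move=> rB; rewrite -row_free_unit -kermx_eq0; apply/eqP/row_matrixP => i.
rewrite row0; set v := row i _.
have hv : v *m (B^T *m B) = 0 by rewrite /v -row_mul mulmx_ker row0.
apply: trmx_inj; rewrite trmx0; apply: (colfree rB).
apply: n2_eq0; rewrite -quad_Gram trmxK.
by rewrite hv mul0mx mxE.
Qed.

Lemma eig_bound d (M : 'M[R]_d) a : M^T = M -> eigenvalue M a -> `|a| <= mxnorm M.
Proof.
move=> Ms /eigenvalueP [v hv v0].
have x0 : v^T != 0 by apply: contra v0 => /eqP h; apply/eqP/trmx_inj; rewrite h trmx0.
have hx : M *m v^T = a *: v^T by rewrite -{1}Ms -trmx_mul hv linearZ.
have := vnorm_mul M v^T; rewrite hx vnormZ_eq ler_pM2r //; exact: vnorm_gt0.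
Qed.

End LinAlg.

Section GD.
Variables (R : realType) (n d : nat) (Phi : 'M[R]_(n, d)) (gamma : R).

Definition Gk (D : {set 'I_n}) := (PhiD Phi D)^T *m PhiD Phi D.
Definition thstar (D : {set 'I_n}) (J : 'cV[R]_n) : 'cV[R]_d :=
  invmx (Gk D) *m ((PhiD Phi D)^T *m (@selmx R n D *m J)).
Definition Sk (D : {set 'I_n}) : 'M[R]_d := 1%:M - gamma *: Gk D.

Lemma Phi_thstar D J : Phi *m thstar D J = Mproj Phi D *m J.
Proof. rewrite /thstar /Mproj /Gk !mulmxA. exact: erefl. Qed.

Lemma gd_step_sub D J th : \rank (PhiD Phi D) = d ->
  gd_step gamma Phi D J th - thstar D J = Sk D *m (th - thstar D J).
Proof.
move=> rD; have hu := Gram_unit rD.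
have hb : (PhiD Phi D)^T *m (@selmx R n D *m J) = Gk D *m thstar D J.
  by rewrite /thstar mulKVmx.
rewrite /gd_step -/(Gk D) hb -mulmxBr /Sk mulmxBl mul1mx -scalemxAl.
by rewrite addrAC.
Qed.

Lemma iter_gd_sub D J th k : \rank (PhiD Phi D) = d ->
  iter k (gd_step gamma Phi D J) th - thstar D J = iter k (mulmx (Sk D)) (th - thstar D J).
Proof.
move=> rD; elim: k => [//|k IH].
by rewrite !iterS gd_step_sub // IH.
Qed.

Lemma n2_sym_dummy : True. Proof. by []. Qed.

Lemma Sk_contr D (ag : R) : \rank (PhiD Phi D) = d ->
  (forall a, eigenvalue (Gk D) a -> `|1 - gamma * a| <= ag) ->
  forall z, n2 (Sk D *m z) <= ag ^+ 2 * n2 z.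
Proof.
move=> rD hag z.
have [s [hs hx]] := @real_spectral_main R d (Gk D) (Gram_sym (PhiD Phi D) : (Gk D)^T = Gk D).
have [wt [wt0 [e1 [e2 e3]]]] := hx z.
have SkE : Sk D = (1 : R)%:M + (- gamma) *: Gk D by rewrite /Sk scaleNr.
have Sks : (Sk D)^T = Sk D by rewrite /Sk linearB /= trmx1 linearZ /= Gram_sym.
have -> : n2 (Sk D *m z) = (z^T *m (Sk D *m Sk D) *m z) ord0 ord0.
  by rewrite /n2 trmx_mul Sks !mulmxA.
rewrite SkE.
rewrite e3 /n2 e1 mulr_sumr; apply: ler_sum => i _.
rewrite ler_wpM2r // mulNr -real_normK ?num_real // lerXn2r ?nnegrE ?normr_ge0 //.
  by apply: le_trans (hag _ (hs i)).
exact: hag.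
Qed.
End GD.

Section Sigma.
Variables (R : realType) (n d : nat) (Phi : 'M[R]_(n, d)).

Lemma eigen_quad (M : 'M[R]_d) a : eigenvalue M a ->
  exists2 x : 'cV[R]_d, x != 0 & (x^T *m M *m x) ord0 ord0 = a * n2 x.
Proof.
move=> /eigenvalueP [v hv v0]; exists v^T.
  by apply: contra v0 => /eqP h; apply/eqP/trmx_inj; rewrite h trmx0.
by rewrite trmxK hv -scalemxAl mxE /n2 trmxK.
Qed.

Local Open Scope classical_set_scope.
Lemma sigma_facts : (0 < d)%N -> (forall x : 'cV[R]_d, Phi *m x = 0 -> x = 0) ->
  0 < inf [set a | eigenvalue (Phi^T *m Phi) a] /\
  forall x : 'cV[R]_d, inf [set a | eigenvalue (Phi^T *m Phi) a] * n2 x <= n2 (Phi *m x).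
Proof.
move=> d0 hinj; set E := [set a | _].
have [s [hs hx]] := @real_spectral_main R d (Phi^T *m Phi) (Gram_sym Phi).
have epos a : eigenvalue (Phi^T *m Phi) a -> 0 < a.
  move=> /eigen_quad [x x0 hxa].
  have hp : 0 < n2 (Phi *m x).
    apply: n2_gt0; apply: contra x0 => /eqP /hinj ->; by [].
  by move: hp; rewrite -quad_Gram -mulmxA mulmxA hxa pmulr_lgt0 // n2_gt0.
have [i0 _ hi0] := @arg_minP _ _ _ (Ordinal d0) xpredT s isT.
have lb a : eigenvalue (Phi^T *m Phi) a -> s i0 <= a.
  move=> /eigen_quad [x x0 hxa].
  have [wt [wt0 [e1 [e2 _]]]] := hx x.
  rewrite -(@ler_pM2r _ (n2 x)) ?n2_gt0 // -hxa -mulmxA mulmxA.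
  rewrite [X in _ <= X]e2 /n2 e1 mulr_sumr; apply: ler_sum => i _.
  by rewrite ler_wpM2r // hi0.
have E0 : E !=set0 by exists (s i0); exact: hs.
have Elb : lbound E (s i0) by move=> a; exact: lb.
split.
  apply: (lt_le_trans (epos _ (hs i0))); exact: lb_le_inf.
move=> x; have [wt [wt0 [e1 [e2 _]]]] := hx x.
rewrite -quad_Gram e2 /n2 e1 mulr_sumr; apply: ler_sum => i _.
rewrite ler_wpM2r //; apply: ge_inf; first by exists (s i0).
exact: hs.
Qed.
End Sigma.

Section Sups.
Local Open Scope classical_set_scope.
Variables (R : realType) (n d : nat) (Phi : 'M[R]_(n, d)) (D : nat -> {set 'I_n}).

Lemma alpha_GD_ub gamma k a : eigenvalue (Gk Phi (D k)) a ->
  `|1 - gamma * a| <= alpha_GD gamma Phi D.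
Proof.
move=> ha; apply: ub_le_sup; last by exists k, a.
exists (1 + `|gamma| * \big[Num.max/0]_(S : {set 'I_n}) mxnorm (Gk Phi S)).
move=> _ [k' [a' [ha' ->]]].
apply: (le_trans (ler_normB _ _)); rewrite normr1 lerD2l normrM ler_wpM2l //.
apply: (le_trans (eig_bound (Gram_sym _) ha')).
exact: (le_bigmax _ (fun S => mxnorm (Gk Phi S))).
Qed.

Lemma delta_FV_ub k : mxnorm (Mproj Phi (D k)) <= delta_FV Phi D.
Proof.
apply: ub_le_sup; last by exists k.
exists (\big[Num.max/0]_(S : {set 'I_n}) mxnorm (Mproj Phi S)) => _ [k' ->].
exact: (le_bigmax _ (fun S => mxnorm (Mproj Phi S))).
Qed.

Lemma delta_FV_ge0 : 0 <= delta_FV Phi D.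
Proof. exact: le_trans (mxnorm_ge0 _) (delta_FV_ub 0). Qed.

Variables (A : finType) (P : A -> 'M[R]_n) (r : 'I_n -> A -> R) (alpha : R).
Hypothesis P_ge0 : forall a i j, 0 <= P a i j.
Hypothesis P_sum : forall a i, \sum_(j < n) P a i j = 1.
Hypothesis r01 : forall i a, 0 <= r i a <= 1.
Hypothesis alpha01 : 0 < alpha < 1.

Lemma vnorm_Jpol mu : vnorm (Jpol P r alpha mu) <= Bd alpha.
Proof.
apply: vnorm_le; first exact: Bd_ge0.
move=> i; case/andP: (Jpol_box P_ge0 P_sum r01 alpha01 mu i) => h1 h2.
by rewrite ger0_norm.
Qed.

Lemma delta_app_ub k mu :
  vnorm (Mproj Phi (D k) *m Jpol P r alpha mu - Jpol P r alpha mu) <= delta_app P r alpha Phi D.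
Proof.
apply: ub_le_sup; last by exists k, mu.
exists ((\big[Num.max/0]_(S : {set 'I_n}) mxnorm (Mproj Phi S) + 1) * Bd alpha).
move=> _ [k' [mu' ->]].
apply: (le_trans (vnormD _ _)); rewrite vnormN mulrDl mul1r lerD ?vnorm_Jpol //.
apply: (le_trans (vnorm_mul _ _)); apply: ler_pM.
- exact: mxnorm_ge0.
- exact: vnorm_ge0.
- exact: (le_bigmax _ (fun S => mxnorm (Mproj Phi S))).
- exact: vnorm_Jpol.
Qed.
End Sups.

Lemma iter_fix T (f : T -> T) x k : f x = x -> iter k f x = x.
Proof. by move=> h; elim: k => [//|k IH]; rewrite iterS IH h. Qed.

Theorem mainTheorem8 (R : realType) (n d : nat) (A : finType)
  (P : A -> 'M[R]_n) (r : 'I_n -> A -> R) (alpha : R)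
  (m H eta : nat) (gamma epsLA epsPE : R)
  (Phi : 'M[R]_(n, d)) (D : nat -> {set 'I_n})
  (mu : nat -> 'I_n -> A) (w : nat -> 'cV[R]_n) (theta : nat -> 'cV[R]_d) :
  (* MDP *)
  (forall a i j, 0 <= P a i j) ->
  (forall a i, \sum_(j < n) P a i j = 1) ->
  (forall i a, 0 <= r i a <= 1) ->
  0 < alpha < 1 ->
  (* parameters *)
  (0 < m)%N -> (0 < H)%N -> (0 < eta)%N -> 0 < gamma ->
  0 <= epsLA -> 0 <= epsPE -> (0 < d)%N ->
  (forall k, \rank (PhiD Phi (D k)) = d) ->
  (* the algorithm *)
  (forall k, vnorm (iter H (Tbell P r alpha) (Phi *m theta k)
               - Tmu P r alpha (mu k.+1) (iter H.-1 (Tbell P r alpha) (Phi *m theta k)))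
             <= epsLA) ->
  (forall k i, i \notin D k -> w k.+1 i ord0 = 0) ->
  (forall k, vnorm (w k.+1) <= epsPE) ->
  (forall k, theta k.+1 =
     iter eta (gd_step gamma Phi (D k)
       (iter m (Tmu P r alpha (mu k.+1)) (iter H.-1 (Tbell P r alpha) (Phi *m theta k))
        + w k.+1)) (theta k)) ->
  let c := Num.sqrt (n%:R) * mxnorm Phi / sigma_min Phi in
  let aGD := alpha_GD gamma Phi D in
  let dFV := delta_FV Phi D in
  let dapp := delta_app P r alpha Phi D in
  let beta := alpha ^+ (m + H - 1) * dFV
              + c * aGD ^+ eta * (alpha ^+ (m + H - 1) * dFV + 1) in
  let tau := (1 + c * aGD ^+ eta)
               * ((alpha ^+ m + alpha ^+ (m + H - 1)) / (1 - alpha) * dFV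
                  + dapp + dFV * epsPE)
             + c * aGD ^+ eta / (1 - alpha) in
  forall k, (1 <= k)%N ->
    vnorm (Jpol P r alpha (mu k) - Phi *m theta k)
      <= beta * vnorm (Phi *m theta k.-1 - Jpol P r alpha (mu k.-1)) + tau.
Proof.
move=> hP0 hPs hr ha hm hH heta hg heLA hePE hd hrank _ _ hw hth c aGD dFV dapp beta tau k hk.
case: k hk => [//|k] _ /=.
have a0 : 0 <= alpha by case/andP: ha => /ltW.
have n0 : (0 < n)%N.
  have := rank_leq_row (PhiD Phi (D 0)); rewrite hrank => h.
  by rewrite (leq_trans hd) // (leq_trans h) // -[X in (_ <= X)%N]card_ord max_card.
pose x0 := mu 0 (Ordinal n0).
set Jp := Phi *m theta k.
set X := iter H.-1 (Tbell P r alpha) Jp.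
set Jh := iter m (Tmu P r alpha (mu k.+1)) X + w k.+1.
set M := Mproj Phi (D k).
set Jm := Jpol P r alpha (mu k.+1).
set Jmp := Jpol P r alpha (mu k).
set e := vnorm (Jp - Jmp).
set q := c * aGD ^+ eta.
have Bd0 := Bd_ge0 ha.
have boxJ (mu' : 'I_n -> A) := Jpol_box hP0 hPs hr ha mu'.
have aGD0 : 0 <= aGD.
  have [s [hs _]] := @real_spectral_main R d (Gk Phi (D k)) (Gram_sym _).
  by rewrite /aGD; apply: le_trans (normr_ge0 _) (@alpha_GD_ub R n d Phi D gamma k _ (hs (Ordinal hd))).
have q0 : 0 <= q.
  rewrite /q /c mulr_ge0 ?exprn_ge0 // divr_ge0 ?sqrtr_ge0 //.
  by rewrite mulr_ge0 ?sqrtr_ge0 ?mxnorm_ge0.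
have hE : vnorm (Jm - M *m Jh) <= dapp + dFV * (alpha ^+ m * (Bd alpha + alpha ^+ H.-1 * e) + epsPE).
  have -> : Jm - M *m Jh = - (M *m Jm - Jm) + M *m (Jm - Jh).
    by rewrite mulmxBr opprB addrA subrK.
  apply: le_trans (vnormD _ _) _; rewrite vnormN; apply: lerD.
    exact: (delta_app_ub Phi D hP0 hPs hr ha k (mu k.+1)).
  apply: le_trans (vnorm_mul _ _) _; apply: ler_pM; rewrite ?mxnorm_ge0 ?vnorm_ge0 //.
    exact: delta_FV_ub.
  have hfix : Jm = iter m (Tmu P r alpha (mu k.+1)) Jm.
    by rewrite iter_fix // (Jpol_fix hP0 hPs hr ha).
  have -> : Jm - Jh = (iter m (Tmu P r alpha (mu k.+1)) Jm - iter m (Tmu P r alpha (mu k.+1)) X) - w k.+1.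
    by rewrite /Jh opprD addrA -hfix.
  apply: le_trans (vnormD _ _) _; rewrite vnormN lerD ?hw //.
  apply: le_trans (iter_Tmu_contr r hP0 hPs ha _ _ _ _) _; rewrite ler_wpM2l ?exprn_ge0 //.
  have -> : Jm - X = (Jm - iter H.-1 (Tbell P r alpha) Jmp) + (iter H.-1 (Tbell P r alpha) Jmp - X).
    by rewrite addrA subrK.
  apply: le_trans (vnormD _ _) _; apply: lerD.
    apply: box_dist => //; first exact: boxJ.
    exact: (iter_Tbell_box hP0 hPs hr ha x0 H.-1 (boxJ (mu k))).
  by rewrite /X (le_trans (iter_Tbell_contr r hP0 hPs ha x0 _ _ _)) // vnormB.
have hF : vnorm (Phi *m theta k.+1 - M *m Jh) <= q * vnorm (Jp - M *m Jh).
  set ts := thstar Phi (D k) Jh.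
  set S := Sk Phi gamma (D k).
  have e1 : Phi *m theta k.+1 - M *m Jh = Phi *m (iter eta (mulmx S) (theta k - ts)).
    by rewrite (hth k) -iter_gd_sub // mulmxBr Phi_thstar.
  have e2 : Jp - M *m Jh = Phi *m (theta k - ts) by rewrite mulmxBr Phi_thstar.
  rewrite e1 e2; set z0 := theta k - ts.
  have step z : n2 (S *m z) <= aGD ^+ 2 * n2 z.
    apply: (Sk_contr (hrank k)) => a ha'; exact: alpha_GD_ub ha'.
  have hn j : n2 (iter j (mulmx S) z0) <= aGD ^+ 2 ^+ j * n2 z0.
    elim: j => [|j IH]; first by rewrite expr0 mul1r.
    rewrite iterS (le_trans (step _)) // [_ ^+ j.+1]exprS -mulrA ler_wpM2l ?exprn_ge0 //.
  have hinj : forall x : 'cV[R]_d, Phi *m x = 0 -> x = 0.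
    move=> x hx; apply: (colfree (hrank 0)).
    by rewrite /PhiD -mulmxA hx mulmx0.
  have [sig0 sigb] := sigma_facts hd hinj.
  set I := inf _ in sig0 sigb.
  set Y := aGD ^+ eta * Num.sqrt n%:R * vnorm (Phi *m z0) / Num.sqrt I.
  have sI : 0 < Num.sqrt I by rewrite sqrtr_gt0.
  have Y0 : 0 <= Y.
    by apply: divr_ge0; [rewrite !mulr_ge0 ?exprn_ge0 ?sqrtr_ge0 ?vnorm_ge0 | exact: sqrtr_ge0].
  have hz : vnorm (iter eta (mulmx S) z0) <= Y.
    rewrite -(ler_pXn2r (isT : (0 < 2)%N)) ?nnegrE ?vnorm_ge0 //.
    have I0 : 0 <= I := ltW sig0.
    rewrite /Y expr_div_n !exprMn !sqr_sqrtr ?ler0n //.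
    apply: le_trans (vnorm_n2 _) _; apply: le_trans (hn eta) _.
    have hz0 : n2 z0 <= n%:R * vnorm (Phi *m z0) ^+ 2 / I.
      rewrite ler_pdivlMr // [_ * I]mulrC; exact: le_trans (sigb z0) (n2_vnorm _).
    rewrite exprAC; apply: le_trans (ler_wpM2l _ hz0) _; first by rewrite !exprn_ge0.
    by rewrite !mulrA.
  apply: le_trans (vnorm_mul _ _) _.
  apply: le_trans (ler_wpM2l (mxnorm_ge0 _) hz) _.
  by rewrite /Y /q /c /sigma_min -/I le_eqVlt; apply/orP; left; apply/eqP; ring.
have hG : vnorm (Jp - M *m Jh) <= e + Bd alpha + vnorm (Jm - M *m Jh).
  have -> : Jp - M *m Jh = (Jp - Jmp) + (Jmp - Jm) + (Jm - M *m Jh) by rewrite !addrA !subrK.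
  apply: le_trans (vnormD _ _) _; rewrite lerD2r.
  apply: le_trans (vnormD _ _) _; rewrite lerD2l.
  by apply: box_dist => //; exact: boxJ.
have dFV0 : 0 <= dFV := delta_FV_ge0 Phi D.
have e0 : 0 <= e := vnorm_ge0 _.
have hT : vnorm (Jm - Phi *m theta k.+1) <= vnorm (Jm - M *m Jh) + vnorm (Phi *m theta k.+1 - M *m Jh).
  have -> : Jm - Phi *m theta k.+1 = (Jm - M *m Jh) - (Phi *m theta k.+1 - M *m Jh).
    by rewrite opprB addrA subrK.
  by apply: le_trans (vnormD _ _) _; rewrite vnormN.
set U := dapp + dFV * (alpha ^+ m * (Bd alpha + alpha ^+ H.-1 * e) + epsPE).
have step1 : vnorm (Jm - Phi *m theta k.+1) <= (1 + q) * U + q * e + q * Bd alpha.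
  apply: le_trans hT _.
  have h1 := le_trans hF (ler_wpM2l q0 hG).
  have h2 : (1 + q) * vnorm (Jm - M *m Jh) <= (1 + q) * U.
    by rewrite ler_wpM2l // addr_ge0.
  nra.
apply: le_trans step1 _.
have eA : alpha ^+ (m + H - 1) = alpha ^+ m * alpha ^+ H.-1.
  by rewrite -exprD -addnBA // subn1.
rewrite /beta /tau -/q eA -/e.
change ((1 - alpha)^-1) with (Bd alpha).
rewrite -subr_ge0.
have -> : ((alpha ^+ m * alpha ^+ H.-1 * dFV + q * (alpha ^+ m * alpha ^+ H.-1 * dFV + 1)) * e +
   ((1 + q) * ((alpha ^+ m + alpha ^+ m * alpha ^+ H.-1) * Bd alpha * dFV + dapp + dFV * epsPE) +
    q * Bd alpha)) - ((1 + q) * U + q * e + q * Bd alpha) =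
   (1 + q) * (alpha ^+ m * alpha ^+ H.-1 * Bd alpha * dFV).
  rewrite /U; ring.
by rewrite !mulr_ge0 ?addr_ge0 ?exprn_ge0.
Qed.
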